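(* Let $\mathcal C$ be a full subcategory of grading-restricted generalized $V$-modules for a vertex operator algebra $V$ such that $0\in\mathcal C$, $\mathcal C$ is closed under submodules, quotients and finite direct sums, and every module in $\mathcal C$ is finitely generated. Let $\alpha:I\to\mathcal C$ be a direct system over a directed set $I$ with transition maps $f_i^j$, and $(\varinjlim\alpha,\{\phi_i\})$ its direct limit in the category of weak $V$-modules. Then for each $i\in I$ there exists $j\in I$ with $j\ge i$ such that $\ker\phi_i=\ker f_i^j$.
   Context: Direct limits in the category of weak $V$-modules: $(\varinjlim\alpha,\{\phi_i\})$ with $\phi_j\circ f_i^j=\phi_i$ for $i\le j$, universal among such targets, where $f_i^j=\alpha(i\to j)$. *)

(* Defs.v *)
From HB Require Import structures.
From mathcomp Require Import all_boot all_order all_algebra.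
From mathcomp Require Import complex Rstruct.
Set Implicit Arguments.
Unset Strict Implicit.
Unset Printing Implicit Defensive.
Import Order.TTheory GRing.Theory Num.Theory.
Local Open Scope ring_scope.

Notation CC := (Rdefinitions.R[i]).

Section Generic.
Variable K : fieldType.

Definition gbinom (m : int) (i : nat) : K :=
  (\prod_(k < i) (m%:~R - (k : nat)%:R)) / (i`!)%:R.

Definition lin_on (W1 W2 : lmodType K) (f : W1 -> W2) : Prop :=
  forall (a : K) (x y : W1), f (a *: x + y) = a *: f x + f y.

(* Y(u,x) w = sum_n (mW u n w) x^{-n-1} : lower truncation *)
Definition truncated (V W : lmodType K) (mW : V -> int -> W -> W) : Prop :=
  forall (u : V) (w : W), exists N : int, forall n : int, N <= n -> mW u n w = 0.

(* Jacobi identity, in the equivalent component (Borcherds) form: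
   sum_{i>=0} binom(m,i) (u_{l+i} v)_{m+n-i} w
     = sum_{i>=0} (-1)^i binom(l,i) (u_{l+m-i} v_{n+i} w - (-1)^l v_{l+n-i} u_{m+i} w).
   Both sums have finitely many nonzero terms (truncation); we state that
   all sufficiently long partial sums agree. *)
Definition borcherds (V W : lmodType K) (mV : V -> int -> V -> V)
    (mW : V -> int -> W -> W) : Prop :=
  forall (u v : V) (w : W) (l m n : int), exists N0 : nat, forall N : nat,
    (N0 <= N)%N ->
    \sum_(i < N) gbinom m i *: mW (mV u (l + (i : nat)%:Z) v) (m + n - (i : nat)%:Z) w
    = \sum_(i < N) ((-1) ^+ i * gbinom l i) *:
        (mW u (l + m - (i : nat)%:Z) (mW v (n + (i : nat)%:Z) w)
         - (-1) ^ l *: mW v (l + n - (i : nat)%:Z) (mW u (m + (i : nat)%:Z) w)).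

Definition fin_dim (W : lmodType K) (P : W -> Prop) : Prop :=
  exists s : seq W, forall w, P w ->
    exists c : 'I_(size s) -> K, w = \sum_(i < size s) c i *: s`_i.

Definition gen_eig (W : lmodType K) (L0 : W -> W) (a : K) (w : W) : Prop :=
  exists k : nat, iter k (fun y => L0 y - a *: y) w = 0.

End Generic.

(* Vertex operator algebra over a field K (FLM / LL definition).
   vY u n = u_n, the coefficient of x^{-n-1} in Y(u,x);
   L(n) = cvec_{n+1}. *)
Record voa (K : fieldType) := Voa {
  vsp :> lmodType K;
  vY : vsp -> int -> vsp -> vsp;
  vac : vsp;
  cvec : vsp;
  cch : K;
  vY_lin : forall u n, lin_on (vY u n);
  vY_linl : forall n w, lin_on (fun u => vY u n w);
  vY_trunc : truncated vY;
  vY_vac : forall n w, vY vac n w = if n == -1 then w else 0;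
  vY_creat : forall v, vY v (-1) vac = v /\ (forall n : int, 0 <= n -> vY v n vac = 0);
  vY_jacobi : borcherds vY vY;
  vY_vir : forall (m n : int) (v : vsp),
    vY cvec (m + 1) (vY cvec (n + 1) v) - vY cvec (n + 1) (vY cvec (m + 1) v)
    = (m - n)%:~R *: vY cvec (m + n + 1) v
      + ((if m + n == 0 then (m ^+ 3 - m)%:~R / 12 else 0) * cch) *: v;
  (* V = (+)_{n in Z} V_(n), V_(n) = {v | L(0) v = n v} *)
  vY_grad : forall v, exists s : seq (int * vsp),
    (forall x, x \in s -> vY cvec 1 x.2 = (x.1)%:~R *: x.2) /\ v = \sum_(x <- s) x.2;
  vY_findim : forall n : int, fin_dim (fun v => vY cvec 1 v = n%:~R *: v);
  vY_lowbd : exists N : int, forall n : int, n < N ->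
    forall v, vY cvec 1 v = n%:~R *: v -> v = 0;
  cvec_wt : vY cvec 1 cvec = 2%:R *: cvec;
  (* L(-1)-derivative property: Y(L(-1)v, x) = d/dx Y(v, x) *)
  vY_deriv : forall v n w, vY (vY cvec 0 v) n w = - n%:~R *: vY v (n - 1) w
}.
Arguments vY {K} _.
Arguments vac {K} _.
Arguments cvec {K} _.

Record wmod (K : fieldType) (V : voa K) := Wmod {
  wcar :> lmodType K;
  wY : V -> int -> wcar -> wcar;
  wY_lin : forall u n, lin_on (wY u n);
  wY_linl : forall n w, lin_on (fun u => wY u n w);
  wY_trunc : truncated wY;
  wY_vac : forall n w, wY (vac V) n w = if n == -1 then w else 0;
  wY_jacobi : borcherds (vY V) wY
}.
Arguments wY {K V} _.

Section Modules.
Variables (K : fieldType) (V : voa K).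

Definition L0 (W : wmod V) : W -> W := wY W (cvec V) 1.

Definition is_grmod (W : wmod V) : Prop :=
  [/\ (forall w : W, exists s : seq (K * W),
          (forall x, x \in s -> gen_eig (@L0 W) x.1 x.2) /\ w = \sum_(x <- s) x.2),
      (forall a : K, fin_dim (gen_eig (@L0 W) a)) &
      (forall a : K, exists M : int, forall m : int, m < M ->
          forall w : W, gen_eig (@L0 W) (a + m%:~R) w -> w = 0)].

Record vhom (W1 W2 : wmod V) := Hom {
  hfun :> W1 -> W2;
  hfun_lin : lin_on hfun;
  hfun_Y : forall (u : V) (n : int) (w : W1), hfun (wY W1 u n w) = wY W2 u n (hfun w)
}.

Definition submodule (W : wmod V) (S : W -> Prop) : Prop :=
  [/\ S 0, (forall (a : K) x y, S x -> S y -> S (a *: x + y)) &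
      (forall (u : V) (n : int) x, S x -> S (wY W u n x))].

Definition fin_gen (W : wmod V) : Prop :=
  exists s : seq W, forall S : W -> Prop, submodule S ->
    (forall x, x \in s -> S x) -> forall w, S w.

Definition good_subcat (Ccl : wmod V -> Prop) : Prop :=
  (forall W, Ccl W -> is_grmod W) /\
  [/\
      (forall Z : wmod V, (forall z : Z, z = 0) -> Ccl Z),
      (forall (W M : wmod V) (g : vhom M W), Ccl W -> injective g -> Ccl M),
      (forall (W M : wmod V) (g : vhom W M), Ccl W -> (forall y : M, exists x : W, g x = y) -> Ccl M),
      (* closed under (binary, hence finite) direct sums: M is a biproduct *)
      (forall (W1 W2 M : wmod V) (i1 : vhom W1 M) (i2 : vhom W2 M)
              (p1 : vhom M W1) (p2 : vhom M W2),
          Ccl W1 -> Ccl W2 ->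
          (forall x, p1 (i1 x) = x) -> (forall x, p2 (i2 x) = x) ->
          (forall m, i1 (p1 m) + i2 (p2 m) = m) -> Ccl M) &
      (forall W, Ccl W -> fin_gen W)].

Definition directed (I : Type) (le : rel I) : Prop :=
  [/\ (forall i, le i i), (forall i j k, le i j -> le j k -> le i k) &
      (forall i j, exists k, le i k && le j k)].

Definition dir_system (I : Type) (le : rel I) (alpha : I -> wmod V)
    (f : forall i j, le i j -> vhom (alpha i) (alpha j)) : Prop :=
  (forall i (h : le i i) x, f i i h x = x) /\
  (forall i j k (hij : le i j) (hjk : le j k) (hik : le i k) x,
      f j k hjk (f i j hij x) = f i k hik x).

Definition is_dir_limit (I : Type) (le : rel I) (alpha : I -> wmod V)
    (f : forall i j, le i j -> vhom (alpha i) (alpha j))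
    (L : wmod V) (phi : forall i, vhom (alpha i) L) : Prop :=
  (forall i j (h : le i j) x, phi j (f i j h x) = phi i x) /\
  (forall (W : wmod V) (psi : forall i, vhom (alpha i) W),
      (forall i j (h : le i j) x, psi j (f i j h x) = psi i x) ->
      exists g : vhom L W, (forall i x, g (phi i x) = psi i x) /\
        (forall g' : vhom L W, (forall i x, g' (phi i x) = psi i x) ->
           forall y, g' y = g y)).

End Modules.

(* Main.v *)
From Pilot Require Import Defs.
From HB Require Import structures.
From mathcomp Require Import all_boot all_order all_algebra.
From mathcomp Require Import complex Rstruct.
From mathcomp Require Import boolp.
Set Implicit Arguments.
Unset Strict Implicit.
Unset Printing Implicit Defensive.
Import Order.TTheory GRing.Theory Num.Theory.
Local Open Scope ring_scope.

Section HomLemmas.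
Variables (V : voa CC) (W1 W2 : wmod V) (g : vhom W1 W2).
Lemma gD x y : g (x + y) = g x + g y.
Proof. by have := hfun_lin g 1 x y; rewrite !scale1r. Qed.
Lemma g0 : g 0 = 0.
Proof. by apply: (addrI (g 0)); rewrite addr0 -gD addr0. Qed.
Lemma gZ a x : g (a *: x) = a *: g x.
Proof. by have := hfun_lin g a x 0; rewrite !addr0 g0 addr0. Qed.
Lemma gN x : g (- x) = - g x.
Proof. by rewrite -scaleN1r gZ scaleN1r. Qed.
End HomLemmas.

Record dsys := DSys {
  dV : voa CC; dI : Type; dle : rel dI; dal : dI -> wmod dV;
  df : forall i j, dle i j -> vhom (dal i) (dal j);
  dHI : directed dle; dHf : dir_system df; di0 : dI }.

Section Q.
Variable D : dsys.
Local Notation I := (@dI D).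
Local Notation le := (@dle D).
Local Notation al := (@dal D).
Local Notation f := (@df D).

Lemma le_refl i : le i i. Proof. by case: (dHI D). Qed.
Lemma le_trans i j k : le i j -> le j k -> le i k.
Proof. by case: (dHI D) => _ H _; apply: H. Qed.
Lemma dir3 i j : exists k, le i k && le j k.
Proof. by case: (dHI D). Qed.
Definition up i j := proj1_sig (cid (dir3 i j)).
Lemma up_l i j : le i (up i j).
Proof. by rewrite /up; case: cid => k /= /andP[]. Qed.
Lemma up_r i j : le j (up i j).
Proof. by rewrite /up; case: cid => k /= /andP[]. Qed.

Lemma fid i (h : le i i) x : f h x = x.
Proof. by case: (dHf D) => H _; apply: H. Qed.
Lemma fcomp i j k (hij : le i j) (hjk : le j k) (hik : le i k) x :
  f hjk (f hij x) = f hik x.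
Proof. by case: (dHf D) => _ H; apply: H. Qed.

Lemma firr i j (h h' : le i j) x : f h x = f h' x.
Proof. by rewrite (bool_irrelevance h h'). Qed.
Lemma eq_up l m k (h1 : le l k) (h2 : le m k) k' (hk : le k k') x y :
  f h1 x = f h2 y -> f (le_trans h1 hk) x = f (le_trans h2 hk) y.
Proof. by move=> E; rewrite -(fcomp h1 hk (le_trans h1 hk)) E; apply: fcomp. Qed.

Definition S := {i : I & (al i : Type)}.
Definition R (s t : S) := exists k (h1 : le (projT1 s) k) (h2 : le (projT1 t) k),
  f h1 (projT2 s) = f h2 (projT2 t).

Lemma R_refl s : R s s.
Proof. by rewrite /R; exists (projT1 s), (le_refl _), (le_refl _). Qed.
Lemma R_sym s t : R s t -> R t s.
Proof. by case=> k [h1 [h2 E]]; rewrite /R; exists k, h2, h1. Qed.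
Lemma R_trans s t u : R s t -> R t u -> R s u.
Proof.
case=> k1 [a1 [b1 E1]] [k2 [a2 [b2 E2]]].
rewrite /R.
exists (up k1 k2), (le_trans a1 (up_l k1 k2)), (le_trans b2 (up_r k1 k2)).
rewrite (eq_up (up_l k1 k2) E1) (firr (le_trans b1 _) (le_trans a2 (up_r k1 k2))).
exact: eq_up.
Qed.

Definition Q := {P : S -> Prop | exists s, P = R s}.
Definition cl (s : S) : Q := exist _ (R s) (ex_intro _ s erefl).
Lemma clE s t : cl s = cl t <-> R s t.
Proof.
split.
  by move=> /(f_equal sval) /= E; rewrite E; apply: R_refl.
move=> Hst; apply: eq_exist; apply: funext => u; apply: propext; split.
  by move=> H; apply: R_trans (R_sym Hst) H.
by move=> H; apply: R_trans Hst H.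
Qed.

Definition rep (q : Q) : S := sval (cid (proj2_sig q)).
Lemma repK q : cl (rep q) = q.
Proof.
case: q => P hP; rewrite /rep /=; case: (cid hP) => s /= E.
by apply: eq_exist.
Qed.

Definition c (l : I) (x : al l) : Q := cl (existT _ l x).
Arguments c : clear implicits.
Lemma cP l x m y : c l x = c m y <->
  exists k (h1 : le l k) (h2 : le m k), f h1 x = f h2 y.
Proof. exact: clE. Qed.
Lemma repKc q : q = c (projT1 (rep q)) (projT2 (rep q)).
Proof. by rewrite /c -{1}(repK q); case: (rep q). Qed.
Lemma cpush l m (h : le l m) x : c l x = c m (f h x).
Proof. by apply/cP; exists m, h, (le_refl m); rewrite fid. Qed.

Lemma liftQ q : exists j, forall m, le j m -> exists x, q = c m x.
Proof.
exists (projT1 (rep q)) => m h; exists (f h (projT2 (rep q))).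
by rewrite -cpush -repKc.
Qed.

Lemma lift2 q1 q2 : exists t : {l : I & ((al l : Type) * (al l : Type))%type},
  q1 = c (projT1 t) (projT2 t).1 /\ q2 = c (projT1 t) (projT2 t).2.
Proof.
have [j1 H1] := liftQ q1; have [j2 H2] := liftQ q2.
have [x Hx] := H1 _ (up_l j1 j2); have [y Hy] := H2 _ (up_r j1 j2).
by exists (existT _ (up j1 j2) (x, y)).
Qed.

Lemma common2 q1 q2 : exists m x y, q1 = c m x /\ q2 = c m y.
Proof. by have [[m [x y]] /= [? ?]] := lift2 q1 q2; exists m, x, y. Qed.

Lemma common3 q1 q2 q3 : exists m x y z, [/\ q1 = c m x, q2 = c m y & q3 = c m z].
Proof.
have [j1 H1] := liftQ q1; have [j2 H2] := liftQ q2; have [j3 H3] := liftQ q3.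
pose m := up (up j1 j2) j3.
have h1 : le j1 m by apply: le_trans (up_l _ _) (up_l _ _).
have h2 : le j2 m by apply: le_trans (up_r _ _) (up_l _ _).
have h3 : le j3 m by apply: up_r.
have [x Hx] := H1 _ h1; have [y Hy] := H2 _ h2; have [z Hz] := H3 _ h3.
by exists m, x, y, z.
Qed.

Definition un (g : forall l, al l -> al l) (q : Q) : Q :=
  c (projT1 (rep q)) (g _ (projT2 (rep q))).
Lemma unE (g : forall l, al l -> al l)
  (Hg : forall l m (h : le l m) x, f h (g l x) = g m (f h x)) l x :
  un g (c l x) = c l (g l x).
Proof.
rewrite /un; have := repKc (c l x); case: (rep (c l x)) => j y /=.
move=> /esym /cP [k [h1 [h2 E]]].
by apply/cP; exists k, h1, h2; rewrite !Hg E.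
Qed.

Definition bin (g : forall l, al l -> al l -> al l) (q1 q2 : Q) : Q :=
  let t := sval (cid (lift2 q1 q2)) in c (projT1 t) (g _ (projT2 t).1 (projT2 t).2).
Lemma binE (g : forall l, al l -> al l -> al l)
  (Hg : forall l m (h : le l m) x y, f h (g l x y) = g m (f h x) (f h y))
  l x y : bin g (c l x) (c l y) = c l (g l x y).
Proof.
rewrite /bin; case: cid => [[j [x' y']]] /= [/esym/cP [k1 [a1 [b1 E1]]] /esym/cP [k2 [a2 [b2 E2]]]].
apply/cP; exists (up k1 k2), (le_trans a1 (up_l k1 k2)), (le_trans b1 (up_l k1 k2)).
rewrite !Hg; congr (g _ _ _); first exact: eq_up.
rewrite (firr _ (le_trans a2 (up_r k1 k2))) (firr (le_trans b1 _) (le_trans b2 (up_r k1 k2))).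
exact: eq_up.
Qed.

Local Notation V := (dV D).
Definition zeroQ : Q := c (di0 D) 0.
Definition addQ : Q -> Q -> Q := bin (fun l (x y : al l) => x + y).
Definition oppQ : Q -> Q := un (fun l (x : al l) => - x).
Definition scaleQ (a : CC) : Q -> Q := un (fun l (x : al l) => a *: x).
Definition YQ (u : V) (n : int) : Q -> Q := un (fun l (x : al l) => wY (al l) u n x).

Lemma zeroE l : c l 0 = zeroQ.
Proof. by apply/cP; exists (up l (di0 D)), (up_l _ _), (up_r _ _); rewrite !g0. Qed.
Lemma addE l x y : addQ (c l x) (c l y) = c l (x + y).
Proof. by apply: binE => *; apply: gD. Qed.
Lemma oppE l x : oppQ (c l x) = c l (- x).
Proof. by apply: unE => *; apply: gN. Qed.
Lemma scaleE a l x : scaleQ a (c l x) = c l (a *: x).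
Proof. by apply: unE => *; apply: gZ. Qed.
Lemma YE u n l x : YQ u n (c l x) = c l (wY (al l) u n x).
Proof. by apply: unE => *; apply: hfun_Y. Qed.

Lemma QaddrA : associative addQ.
Proof. by move=> q1 q2 q3; have [m [x [y [z [-> -> ->]]]]] := common3 q1 q2 q3; rewrite !addE addrA. Qed.
Lemma QaddrC : commutative addQ.
Proof. by move=> q1 q2; have [m [x [y [-> ->]]]] := common2 q1 q2; rewrite !addE addrC. Qed.
Lemma Qadd0r : left_id zeroQ addQ.
Proof. by move=> q; have [j H] := liftQ q; have [x ->] := H _ (le_refl j); rewrite -(zeroE j) addE add0r. Qed.
Lemma QaddNr : left_inverse zeroQ oppQ addQ.
Proof. by move=> q; have [j H] := liftQ q; have [x ->] := H _ (le_refl j); rewrite oppE addE addNr zeroE. Qed.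
Lemma QscalerA a b q : scaleQ a (scaleQ b q) = scaleQ (a * b) q.
Proof. by have [j H] := liftQ q; have [x ->] := H _ (le_refl j); rewrite !scaleE scalerA. Qed.
Lemma Qscale1r : left_id 1 scaleQ.
Proof. by move=> q; have [j H] := liftQ q; have [x ->] := H _ (le_refl j); rewrite !scaleE scale1r. Qed.
Lemma QscalerDr : right_distributive scaleQ addQ.
Proof. by move=> a q1 q2; have [m [x [y [-> ->]]]] := common2 q1 q2; rewrite !(addE, scaleE) scalerDr. Qed.
Lemma QscalerDl q : {morph scaleQ^~ q : a b / a + b >-> addQ a b}.
Proof. by move=> a b; have [j H] := liftQ q; have [x ->] := H _ (le_refl j); rewrite !(addE, scaleE) scalerDl. Qed.
End Q.
Arguments c : clear implicits.

HB.instance Definition _ (D : dsys) := gen_eqMixin (Q D).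
HB.instance Definition _ (D : dsys) := gen_choiceMixin (Q D).
HB.instance Definition _ (D : dsys) :=
  GRing.isZmodule.Build (Q D) (@QaddrA D) (@QaddrC D) (@Qadd0r D) (@QaddNr D).
HB.instance Definition _ (D : dsys) :=
  GRing.Zmodule_isLmodule.Build CC (Q D) (@QscalerA D) (@Qscale1r D) (@QscalerDr D) (@QscalerDl D).

Section QW.
Variable D : dsys.
Local Notation I := (@dI D).
Local Notation le := (@dle D).
Local Notation al := (@dal D).
Local Notation f := (@df D).
Local Notation V := (dV D).
Local Notation c := (c D).

Lemma addE' l x y : (c l x + c l y : Q D) = c l (x + y). Proof. exact: addE. Qed.
Lemma oppE' l x : (- c l x : Q D) = c l (- x). Proof. exact: oppE. Qed.
Lemma scaleE' a l x : (a *: c l x : Q D) = c l (a *: x). Proof. exact: scaleE. Qed.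
Lemma zeroE' l : c l 0 = (0 : Q D). Proof. exact: zeroE. Qed.
Lemma subE' l x y : (c l x - c l y : Q D) = c l (x - y). Proof. by rewrite oppE' addE'. Qed.

Lemma liftQ1 (q : Q D) : exists j x, q = c j x.
Proof. by have [j H] := liftQ q; have [x ->] := H _ (le_refl j); exists j, x. Qed.

Lemma sumc l N (F : 'I_N -> al l) : \sum_(k < N) c l (F k) = c l (\sum_(k < N) F k).
Proof.
by rewrite (big_morph (c l) (fun x y => esym (addE' x y)) (zeroE' l)).
Qed.

Lemma QY_lin u n : lin_on (@YQ D u n).
Proof.
move=> a q1 q2; have [m [x [y [-> ->]]]] := common2 q1 q2.
by rewrite scaleE' addE' !YE scaleE' addE' wY_lin.
Qed.
Lemma QY_linl n (w : Q D) : lin_on (fun u => @YQ D u n w).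
Proof.
move=> a u1 u2 /=; have [j [x ->]] := liftQ1 w.
by rewrite !YE scaleE' addE' wY_linl.
Qed.
Lemma QY_trunc : truncated (@YQ D).
Proof.
move=> u w; have [j [x ->]] := liftQ1 w.
have [N HN] := @wY_trunc _ _ (al j) u x.
by exists N => n Hn; rewrite YE HN // zeroE'.
Qed.
Lemma QY_vac n w : @YQ D (vac V) n w = if n == -1 then w else 0.
Proof.
have [j [x ->]] := liftQ1 w.
by rewrite YE wY_vac; case: ifP => // _; rewrite zeroE'.
Qed.
Lemma QY_jacobi : borcherds (vY V) (@YQ D).
Proof.
move=> u v w l m n; have [j [x ->]] := liftQ1 w.
have [N0 HN] := @wY_jacobi _ _ (al j) u v x l m n.
exists N0 => N HN'.
under eq_bigr => k _ do rewrite YE scaleE'.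
under [RHS]eq_bigr => k _ do rewrite !YE [X in _ - X]scaleE' subE' scaleE'.
by rewrite !sumc HN.
Qed.

Definition QW : wmod V := Wmod QY_lin QY_linl QY_trunc QY_vac QY_jacobi.

Definition psi (i : I) : vhom (al i) QW.
refine (@Pilot.Defs.Hom _ V (al i) QW (c i) _ _).
- by move=> a x y; rewrite /= scaleE' addE'.
- by move=> u n x; rewrite /= YE.
Defined.

Lemma colim_ker (L : wmod V) (phi : forall i, vhom (al i) L)
  (Hlim : is_dir_limit f phi) i (x : al i) :
  phi i x = 0 -> exists m (h : le i m), f h x = 0.
Proof.
move=> Hx; case: Hlim => _ /(_ QW psi) [].
  by move=> i' j' h y /=; rewrite -cpush.
move=> g [Hg _]; have := Hg i x; rewrite Hx g0 /= -(zeroE' i) => /esym /cP.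
by case=> k [h1 [h2 E]]; exists k, h1; rewrite E g0.
Qed.
End QW.

Lemma lin0 (U W : lmodType CC) (h : U -> W) : lin_on h -> h 0 = 0.
Proof.
move=> H; have := H 1 0 0; rewrite !scale1r addr0 => E.
by apply: (addrI (h 0)); rewrite addr0 -{1}E.
Qed.

Section Ker.
Variables (V : voa CC) (W L : wmod V) (p : vhom W L).
Definition Ksub := {x : W | p x = 0}.
Lemma kval_inj (a b : Ksub) : sval a = sval b -> a = b.
Proof. by case: a b => [x hx] [y hy] /= E; apply: eq_exist. Qed.

Lemma kaddP (a b : Ksub) : p (sval a + sval b) = 0.
Proof. by rewrite gD (svalP a) (svalP b) addr0. Qed.
Lemma koppP (a : Ksub) : p (- sval a) = 0.
Proof. by rewrite gN (svalP a) oppr0. Qed.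
Lemma kscaleP r (a : Ksub) : p (r *: sval a) = 0.
Proof. by rewrite gZ (svalP a) scaler0. Qed.
Lemma kYP u n (a : Ksub) : p (wY W u n (sval a)) = 0.
Proof. by rewrite hfun_Y (svalP a) (lin0 (wY_lin _ _)). Qed.
Definition kzero : Ksub := exist _ 0 (g0 p).
Definition kadd (a b : Ksub) : Ksub := exist _ _ (kaddP a b).
Definition kopp (a : Ksub) : Ksub := exist _ _ (koppP a).
Definition kscale (r : CC) (a : Ksub) : Ksub := exist _ _ (kscaleP r a).
Definition kY (u : V) (n : int) (a : Ksub) : Ksub := exist _ _ (kYP u n a).

Lemma KaddrA : associative kadd.
Proof. by move=> a b d; apply: kval_inj; rewrite /= addrA. Qed.
Lemma KaddrC : commutative kadd.
Proof. by move=> a b; apply: kval_inj; rewrite /= addrC. Qed.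
Lemma Kadd0r : left_id kzero kadd.
Proof. by move=> a; apply: kval_inj; rewrite /= add0r. Qed.
Lemma KaddNr : left_inverse kzero kopp kadd.
Proof. by move=> a; apply: kval_inj; rewrite /= addNr. Qed.
Lemma KscalerA r s a : kscale r (kscale s a) = kscale (r * s) a.
Proof. by apply: kval_inj; rewrite /= scalerA. Qed.
Lemma Kscale1r : left_id 1 kscale.
Proof. by move=> a; apply: kval_inj; rewrite /= scale1r. Qed.
Lemma KscalerDr : right_distributive kscale kadd.
Proof. by move=> r a b; apply: kval_inj; rewrite /= scalerDr. Qed.
Lemma KscalerDl a : {morph kscale^~ a : r s / r + s >-> kadd r s}.
Proof. by move=> r s; apply: kval_inj; rewrite /= scalerDl. Qed.
End Ker.

HB.instance Definition _ V W L p := gen_eqMixin (@Ksub V W L p).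
HB.instance Definition _ V W L p := gen_choiceMixin (@Ksub V W L p).
HB.instance Definition _ V W L p :=
  GRing.isZmodule.Build (@Ksub V W L p) (@KaddrA V W L p) (@KaddrC V W L p) (@Kadd0r V W L p) (@KaddNr V W L p).
HB.instance Definition _ V W L p :=
  GRing.Zmodule_isLmodule.Build CC (@Ksub V W L p) (@KscalerA V W L p) (@Kscale1r V W L p) (@KscalerDr V W L p) (@KscalerDl V W L p).

Section KerW.
Variables (V : voa CC) (W L : wmod V) (p : vhom W L).
Local Notation K := (@Ksub V W L p).

Lemma kval_sum N (F : 'I_N -> K) : sval (\sum_(k < N) F k) = \sum_(k < N) sval (F k).
Proof.
have H : {morph (fun a : K => sval a) : x y / x + y >-> x + y} by [].
by rewrite (big_morph (fun a : K => sval a) H (erefl : sval (0 : K) = 0)).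
Qed.

Lemma KY_lin u n : lin_on (@kY V W L p u n).
Proof. by move=> a x y; apply: kval_inj; rewrite /= wY_lin. Qed.
Lemma KY_linl n (w : K) : lin_on (fun u => @kY V W L p u n w).
Proof. by move=> a x y; apply: kval_inj; rewrite /= wY_linl. Qed.
Lemma KY_trunc : truncated (@kY V W L p).
Proof.
move=> u w; have [N HN] := @wY_trunc _ _ W u (sval w).
by exists N => n Hn; apply: kval_inj; rewrite /= HN.
Qed.
Lemma KY_vac n (w : K) : @kY V W L p (vac V) n w = if n == -1 then w else 0.
Proof. by apply: kval_inj; rewrite /= wY_vac; case: ifP. Qed.
Lemma KY_jacobi : borcherds (vY V) (@kY V W L p).
Proof.
move=> u v w l m n; have [N0 HN] := @wY_jacobi _ _ W u v (sval w) l m n.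
by exists N0 => N HN'; apply: kval_inj; rewrite !kval_sum HN.
Qed.

Definition KW : wmod V := Wmod KY_lin KY_linl KY_trunc KY_vac KY_jacobi.
Definition kemb : vhom KW W.
refine (@Pilot.Defs.Hom _ V KW W (@sval _ _) _ _); by [].
Defined.
Lemma kemb_inj : injective kemb.
Proof. by move=> a b; apply: kval_inj. Qed.
End KerW.

Lemma main_D (D : dsys) (Ccl : wmod (dV D) -> Prop) (HC : good_subcat Ccl)
    (Halpha : forall i, Ccl (@dal D i))
    (L : wmod (dV D)) (phi : forall i, vhom (@dal D i) L)
    (Hlim : is_dir_limit (@df D) phi) (i : dI D) :
  exists j : dI D, exists h : dle i j,
    forall x : dal i, phi i x = 0 <-> df h x = 0.
Proof.
case: HC => _ [_ Hsub _ _ Hfg].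
have CK : Ccl (KW (phi i)) by apply: (Hsub _ _ (kemb (phi i))) => //; apply: kemb_inj.
have [s Hs] := Hfg _ CK.
have [j [h Hj]] : exists j (h : dle i j), forall a, a \in s -> df h (sval a) = 0.
  elim: s {Hs} => [|a s [j2 [h2 IH]]].
    by exists i, (le_refl i).
  have [j1 [h1 E1]] := colim_ker Hlim (svalP a).
  pose j := up j1 j2.
  exists j, (le_trans h1 (up_l j1 j2)) => b; rewrite inE => /orP [/eqP -> | Hb].
    by rewrite -(fcomp h1 (up_l j1 j2)) E1 g0.
  by rewrite (firr _ (le_trans h2 (up_r j1 j2))) -(fcomp h2 (up_r j1 j2)) IH // g0.
exists j, h => x; split.
  move=> Hx.
  pose S := fun y : KW (phi i) => df h (sval y) = 0.
  have : S (exist _ x Hx); last by [].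
  apply: Hs => //.
  split; rewrite /S /=.
  - exact: g0.
  - by move=> a y z Hy Hz; rewrite (hfun_lin (df h)) Hy Hz scaler0 addr0.
  - by move=> u n y Hy; rewrite hfun_Y Hy (lin0 (wY_lin _ _)).
case: Hlim => Hc _ E.
by rewrite -(Hc _ _ h) E g0.
Qed.

Unset Implicit Arguments.
Theorem lemma4 (V : voa CC) (Ccl : wmod V -> Prop) (HC : good_subcat Ccl)
    (I : Type) (le : rel I) (HI : directed le)
    (alpha : I -> wmod V) (Halpha : forall i, Ccl (alpha i))
    (f : forall i j, le i j -> vhom (alpha i) (alpha j))
    (Hf : dir_system f)
    (L : wmod V) (phi : forall i, vhom (alpha i) L)
    (Hlim : is_dir_limit f phi) :
  forall i : I, exists j : I, exists h : le i j,
    forall x : alpha i, phi i x = 0 <-> f i j h x = 0.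
Proof.
move=> i.
exact: (@main_D (@DSys V I le alpha f HI Hf i) Ccl HC Halpha L phi Hlim i).
Qed.
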